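(* Let $(M,g)$ be a four-dimensional oriented smooth Lorentzian manifold with Levi-Civita connection $\nabla$. Consider the equation $$iK^\mu(\nabla_\mu\Psi-C_\mu\Psi+\Psi A_\mu)=0\qquad(\ast)$$ for a smooth $\mathrm{Herm}(2)$-valued vector field $K^\mu$ satisfying $K^\mu\tilde K^\nu+K^\nu\tilde K^\mu=2g^{\mu\nu}e$ and $\nabla_\mu\pi_+(K^\mu)=0$, smooth covector fields $A_\mu$ with values in $\mathfrak{u}(2)$ and $C_\mu$ with values in $\mathfrak{su}(2)$, and a smooth function $\Psi:M\to\mathrm{Mat}(2,\mathbb{C})$. Then $(\ast)$ is invariant under each of the following transformations, i.e. if $(\Psi,K^\mu,C_\mu,A_\mu)$ satisfies $(\ast)$ then so does the transformed quadruple $(\acute\Psi,\acute K^\mu,\acute C_\mu,\acute A_\mu)$: (I) for any smooth $V:M\to U(2)$: $\acute\Psi=\Psi V$, $\acute K^\mu=K^\mu$, $\acute C_\mu=C_\mu$, $\acute A_\mu=V^{-1}A_\mu V-V^{-1}\nabla_\mu V$; (II) for any smooth $S:M\to SU(2)$: $\acute\Psi=S^{-1}\Psi S$, $\acute K^\mu=S^{-1}K^\mu S$, $\acute C_\mu=S^{-1}C_\mu S-S^{-1}\nabla_\mu S$, $\acute A_\mu=S^{-1}A_\mu S-S^{-1}\nabla_\mu S$; (III) for any smooth $S:M\to SU(2)$: $\acute\Psi=S^{-1}\Psi$, $\acute K^\mu=S^{-1}K^\mu S$, $\acute C_\mu=S^{-1}C_\mu S-S^{-1}\nabla_\mu S$,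 $\acute A_\mu=A_\mu$.
   Context: Repeated indices are summed; Greek indices are raised/lowered with $g$. $e$ is the $2\times2$ identity matrix; $\mathrm{Herm}(2)$ = Hermitian $2\times2$ matrices; $\mathfrak{u}(2)$ = anti-Hermitian $2\times2$ matrices; $\mathfrak{su}(2)$ = traceless elements of $\mathfrak{u}(2)$; $U(2)$, $SU(2)$ the unitary and special unitary groups. For $A\in\mathrm{Mat}(2,\mathbb{C})$: $\pi_+(A)=\tfrac12(\operatorname{tr}A)e$, $\pi_-(A)=A-\pi_+(A)$, $\tilde A=\pi_+(A)-\pi_-(A)$. The covariant derivative of a matrix-valued tensor field $V=v_a\sigma^a$ (Pauli basis $\sigma^0=e,\sigma^1,\sigma^2,\sigma^3$, complex tensor fields $v_a$) is $(\nabla v_a)\sigma^a$; products are matrix products of components. *)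

(* Defs.v *)
From HB Require Import structures.
From mathcomp Require Import all_boot all_order all_algebra.
From mathcomp Require Import all_classical all_reals all_analysis.
From mathcomp Require Import complex.
Set Implicit Arguments. Unset Strict Implicit. Unset Printing Implicit Defensive.
Import Order.TTheory GRing.Theory Num.Theory numFieldNormedType.Exports.
Local Open Scope ring_scope.
Local Open Scope complex_scope.

(* Local-coordinate model: points of the chart domain U are in 'rV[R]_4,
   coordinates x^0..x^3; tensor indices range over 'I_4. *)

Definition dir (R : realType) (m : 'I_4) : 'rV[R]_4 := delta_mx 0 m.

Definition pd (R : realType) (m : 'I_4) (f : 'rV[R]_4 -> R) : 'rV[R]_4 -> R :=
  fun x => 'D_(dir R m) f x.

Fixpoint ipd (R : realType) (s : seq 'I_4) (f : 'rV[R]_4 -> R) : 'rV[R]_4 -> R :=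
  if s is m :: s' then pd m (ipd s' f) else f.

Definition smooth_on (R : realType) (U : set 'rV[R]_4) (f : 'rV[R]_4 -> R) :=
  forall (s : seq 'I_4) (m : 'I_4) (x : 'rV[R]_4), U x -> derivable (ipd s f) x (dir R m).

Definition smooth_rmx (R : realType) (k l : nat) (U : set 'rV[R]_4)
  (F : 'rV[R]_4 -> 'M[R]_(k, l)) :=
  forall i j, smooth_on U (fun x => F x i j).

Definition smooth_cmx (R : realType) (U : set 'rV[R]_4) (F : 'rV[R]_4 -> 'M[R[i]]_2) :=
  forall i j, smooth_on U (fun x => complex.Re (F x i j)) /\ smooth_on U (fun x => complex.Im (F x i j)).

Definition pdM (R : realType) (m : 'I_4) (F : 'rV[R]_4 -> 'M[R[i]]_2) : 'rV[R]_4 -> 'M[R[i]]_2 :=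
  fun x => \matrix_(i, j) ((pd m (fun y => complex.Re (F y i j)) x) +i* (pd m (fun y => complex.Im (F y i j)) x)).

Definition adjM (R : realType) (A : 'M[R[i]]_2) : 'M[R[i]]_2 := map_mx (fun z => z^*) A^T.
Definition Herm2 (R : realType) (A : 'M[R[i]]_2) : Prop := adjM A = A.
Definition u2 (R : realType) (A : 'M[R[i]]_2) : Prop := adjM A = - A.
Definition su2 (R : realType) (A : 'M[R[i]]_2) : Prop := adjM A = - A /\ \tr A = 0.
Definition U2 (R : realType) (A : 'M[R[i]]_2) : Prop := A *m adjM A = 1%:M.
Definition SU2 (R : realType) (A : 'M[R[i]]_2) : Prop := A *m adjM A = 1%:M /\ \det A = 1.

Definition pi_plus (R : realType) (A : 'M[R[i]]_2) : 'M[R[i]]_2 := (\tr A / 2)%:M.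
Definition pi_minus (R : realType) (A : 'M[R[i]]_2) : 'M[R[i]]_2 := A - pi_plus A.
Definition tildeM (R : realType) (A : 'M[R[i]]_2) : 'M[R[i]]_2 := pi_plus A - pi_minus A.

Definition eta_plus (R : realType) : 'M[R]_4 :=
  \matrix_(i, j) (if i == j then (if i == 0 then 1 else -1) else 0).
Definition lorentzian (R : realType) (G : 'M[R]_4) : Prop :=
  G^T = G /\ exists P : 'M[R]_4, P \in unitmx /\
     (P^T *m G *m P = eta_plus R \/ P^T *m G *m P = - eta_plus R).

Definition ginv (R : realType) (g : 'rV[R]_4 -> 'M[R]_4) (x : 'rV[R]_4) : 'M[R]_4 :=
  invmx (g x).

Definition christoffel (R : realType) (g : 'rV[R]_4 -> 'M[R]_4) (l m n : 'I_4)
  (x : 'rV[R]_4) : R :=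
  2^-1 * \sum_(r < 4) ginv g x l r *
     (pd m (fun y => g y r n) x + pd n (fun y => g y r m) x - pd r (fun y => g y m n) x).

Definition divM (R : realType) (g : 'rV[R]_4 -> 'M[R]_4)
  (X : 'I_4 -> 'rV[R]_4 -> 'M[R[i]]_2) (x : 'rV[R]_4) : 'M[R[i]]_2 :=
  \sum_(m < 4) pdM m (X m) x
  + \sum_(m < 4) \sum_(l < 4) ((christoffel g m m l x)%:C *: X l x).

(* the equation  i K^mu (nabla_mu Psi - C_mu Psi + Psi A_mu) = 0  on U
   (Psi is a Mat(2,C)-valued function, so nabla_mu Psi = d_mu Psi) *)
Definition eqn_star (R : realType) (U : set 'rV[R]_4)
  (Psi : 'rV[R]_4 -> 'M[R[i]]_2) (K C A : 'I_4 -> 'rV[R]_4 -> 'M[R[i]]_2) : Prop :=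
  forall x, U x ->
    \sum_(m < 4) ('i *: (K m x *m (pdM m Psi x - C m x *m Psi x + Psi x *m A m x))) = 0.

(* Main.v *)
Require Import Defs.
From HB Require Import structures.
From mathcomp Require Import all_boot all_order all_algebra.
From mathcomp Require Import all_classical all_reals all_analysis.
From mathcomp Require Import complex.
From mathcomp Require Import ring.
Import Order.TTheory GRing.Theory Num.Theory numFieldNormedType.Exports.
Local Open Scope ring_scope.
Local Open Scope complex_scope.
Set Implicit Arguments. Unset Strict Implicit. Unset Printing Implicit Defensive.


Definition hasD (R : realType) (x : 'rV[R]_4) (m : 'I_4) (F : 'rV[R]_4 -> 'M[R[i]]_2) (D : 'M[R[i]]_2) :=
  forall i j, is_derive x (dir R m) (fun y => complex.Re (F y i j)) (complex.Re (D i j)) /\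
              is_derive x (dir R m) (fun y => complex.Im (F y i j)) (complex.Im (D i j)).

Lemma hasD_pdM (R : realType) (x : 'rV[R]_4) m (F : 'rV[R]_4 -> 'M[R[i]]_2) D : hasD x m F D -> pdM m F x = D.
Proof.
move=> h; apply/matrixP => i j; rewrite mxE /pd.
case: (h i j) => h1 h2; rewrite !derive_val.
by case: (D i j).
Qed.

Lemma smooth_hasD (R : realType) (U : set 'rV[R]_4) (x : 'rV[R]_4) (m : 'I_4) (F : 'rV[R]_4 -> 'M[R[i]]_2) : smooth_cmx U F -> U x -> hasD x m F (pdM m F x).
Proof.
move=> sF Ux i j; case: (sF i j) => s1 s2; rewrite mxE /=; split.
  exact: (derivableP (s1 [::] m x Ux)).
exact: (derivableP (s2 [::] m x Ux)).
Qed.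

Lemma is_derive_ext (R : realType) x v (f : 'rV[R]_4 -> R) df df' :
  is_derive x v f df -> df = df' -> is_derive x v f df'.
Proof. by move=> h <-. Qed.

Lemma Re_sum (R : realType) n (f : 'I_n -> R[i]) : complex.Re (\sum_(k < n) f k) = \sum_(k < n) complex.Re (f k).
Proof. by apply: (big_morph _ (fun a b => _) (erefl _)); case=> ? ?; case. Qed.
Lemma Im_sum (R : realType) n (f : 'I_n -> R[i]) : complex.Im (\sum_(k < n) f k) = \sum_(k < n) complex.Im (f k).
Proof. by apply: (big_morph _ (fun a b => _) (erefl _)); case=> ? ?; case. Qed.
Lemma ReM (R : realType) (a b : R[i]) : complex.Re (a * b) = complex.Re a * complex.Re b - complex.Im a * complex.Im b.
Proof. by case: a => ? ?; case: b. Qed.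
Lemma ImM (R : realType) (a b : R[i]) : complex.Im (a * b) = complex.Re a * complex.Im b + complex.Im a * complex.Re b.
Proof. by case: a => ? ?; case: b. Qed.
Lemma ReD (R : realType) (a b : R[i]) : complex.Re (a + b) = complex.Re a + complex.Re b.
Proof. by case: a => ? ?; case: b. Qed.
Lemma ImD (R : realType) (a b : R[i]) : complex.Im (a + b) = complex.Im a + complex.Im b.
Proof. by case: a => ? ?; case: b. Qed.

Lemma hasD_mul (R : realType) (x : 'rV[R]_4) m (F G : 'rV[R]_4 -> 'M[R[i]]_2) DF DG : hasD x m F DF -> hasD x m G DG ->
  hasD x m (fun y => F y *m G y) (DF *m G x + F x *m DG).
Proof.
move=> hF hG i j; split.
- have -> : (fun y => complex.Re ((F y *m G y) i j)) =
     \sum_(k < 2) ((fun y => complex.Re (F y i k)) * (fun y => complex.Re (G y k j))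
                - (fun y => complex.Im (F y i k)) * (fun y => complex.Im (G y k j))).
    apply/funext => y; rewrite mxE Re_sum /= fct_sumE; apply: eq_bigr => k _.
    by rewrite ReM.
  apply: is_derive_ext.
    apply: is_derive_sum => k; apply: is_deriveB; apply: is_deriveM.
    + exact: (proj1 (hF i k)).
    + exact: (proj1 (hG k j)).
    + exact: (proj2 (hF i k)).
    + exact: (proj2 (hG k j)).
  rewrite !mxE ReD !Re_sum -big_split /=; apply: eq_bigr => k _.
  rewrite !ReM /GRing.scale /=; ring.
- have -> : (fun y => complex.Im ((F y *m G y) i j)) =
     \sum_(k < 2) ((fun y => complex.Re (F y i k)) * (fun y => complex.Im (G y k j))
                + (fun y => complex.Im (F y i k)) * (fun y => complex.Re (G y k j))).
    apply/funext => y; rewrite mxE Im_sum /= fct_sumE; apply: eq_bigr => k _.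
    by rewrite ImM.
  apply: is_derive_ext.
    apply: is_derive_sum => k; apply: is_deriveD; apply: is_deriveM.
    + exact: (proj1 (hF i k)).
    + exact: (proj2 (hG k j)).
    + exact: (proj2 (hF i k)).
    + exact: (proj1 (hG k j)).
  rewrite !mxE ImD !Im_sum -big_split /=; apply: eq_bigr => k _.
  rewrite !ImM /GRing.scale /=; ring.
Qed.

Lemma hasD_adj (R : realType) (x : 'rV[R]_4) m (F : 'rV[R]_4 -> 'M[R[i]]_2) D : hasD x m F D -> hasD x m (fun y => adjM (F y)) (adjM D).
Proof.
move=> h i j; case: (h j i) => h1 h2; split.
  have -> : (fun y => complex.Re (adjM (F y) i j)) = (fun y => complex.Re (F y j i)).
    by apply/funext => y; rewrite /adjM !mxE; case: (F y j i).
  by rewrite /adjM !mxE; case: (D j i) h1.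
have -> : (fun y => complex.Im (adjM (F y) i j)) = (fun y => - complex.Im (F y j i)).
  by apply/funext => y; rewrite /adjM !mxE /=; case: (F y j i).
rewrite (_ : complex.Im (adjM D i j) = - complex.Im (D j i)).
  exact: (is_deriveN h2).
by rewrite /adjM !mxE; case: (D j i).
Qed.

Lemma hasD_cst (R : realType) (x : 'rV[R]_4) m (A : 'M[R[i]]_2) : hasD x m (fun _ => A) 0.
Proof.
move=> i j; rewrite mxE /=; split; exact: is_derive_cst.
Qed.

Lemma hasD_near (R : realType) (x : 'rV[R]_4) m (F G : 'rV[R]_4 -> 'M[R[i]]_2) D : (\forall y \near x, F y = G y) -> hasD x m F D -> hasD x m G D.
Proof.
move=> nFG h i j; case: (h i j) => h1 h2; split.
  apply: near_eq_is_derive h1; apply: filterS nFG => y -> //.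
apply: near_eq_is_derive h2; apply: filterS nFG => y -> //.
Qed.

Lemma open_near (R : realType) (U : set 'rV[R]_4) (x : 'rV[R]_4) : open U -> U x -> \forall y \near x, U y.
Proof. by move=> oU Ux; apply: open_nbhs_nbhs; split. Qed.

Lemma inv_adj (R : realType) (S : 'M[R[i]]_2) : S *m adjM S = 1%:M -> invmx S = adjM S.
Proof.
move=> h; have [uS _] := mulmx1_unit h.
by rewrite -[invmx S]mulmx1 -h mulmxA mulVmx // mul1mx.
Qed.

Lemma zmod_id (V : zmodType) (a b c d f : V) : (a + (b - c)) - (d - c) + (f - b) = a - d + f.
Proof.
by rewrite opprB addrA [a + (b - c)]addrA [X in X + f - b]addrA subrK (addrAC a b) (addrAC (a - d) b f) addrK.
Qed.

Lemma zmod_id1 (V : zmodType) (a b d f : V) : (a + b - d) + (f - b) = a - d + f.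
Proof. by rewrite addrA (addrAC a b) (addrAC (a - d) b f) addrK. Qed.

Lemma zmod_id2 (V : zmodType) (a b c d f : V) : - c + a + b - (d - c) + (f - b) = a - d + f.
Proof.
by rewrite opprB (addrAC (- c + a) b) -(addrA _ b) (addrC b) subrK (addrC (- c) a) -(addrA a (- c)) addKr.
Qed.
Lemma zmod_id3 (V : zmodType) (a c d f : V) : - c + a - (d - c) + f = a - d + f.
Proof. by rewrite opprB (addrC (- c) a) -(addrA a (- c)) addKr. Qed.
Lemma algII (T : comUnitRingType) (Si S dS dP P C A K : 'M[T]_2) (z : T) :
  S *m Si = 1%:M ->
  z *: (Si *m K *m S *m (((- (Si *m dS *m Si)) *m P + Si *m dP) *m S + Si *m P *m dS
     - (Si *m C *m S - Si *m dS) *m (Si *m P *m S) + (Si *m P *m S) *m (Si *m A *m S - Si *m dS)))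
  = Si *m (z *: (K *m (dP - C *m P + P *m A))) *m S.
Proof.
move=> h.
have canc : forall Z : 'M[T]_2, Z *m S *m Si = Z by move=> Z; rewrite -mulmxA h mulmx1.
have -> : ((- (Si *m dS *m Si)) *m P + Si *m dP) *m S + Si *m P *m dS
     - (Si *m C *m S - Si *m dS) *m (Si *m P *m S) + (Si *m P *m S) *m (Si *m A *m S - Si *m dS)
     = Si *m (dP - C *m P + P *m A) *m S.
  rewrite ?mulmxDl ?mulmxDr ?mulNmx ?mulmxN ?mulmxA ?canc ?mulmxDl ?mulNmx ?mulmxN ?mulmxA ?canc.
  by rewrite -!mulmxA zmod_id2.
by rewrite -scalemxAr -scalemxAl !mulmxA canc.
Qed.

Lemma algIII (T : comUnitRingType) (Si S dS dP P C A K : 'M[T]_2) (z : T) :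
  S *m Si = 1%:M ->
  z *: (Si *m K *m S *m ((- (Si *m dS *m Si)) *m P + Si *m dP
     - (Si *m C *m S - Si *m dS) *m (Si *m P) + (Si *m P) *m A))
  = Si *m (z *: (K *m (dP - C *m P + P *m A))).
Proof.
move=> h.
have canc : forall Z : 'M[T]_2, Z *m S *m Si = Z by move=> Z; rewrite -mulmxA h mulmx1.
have -> : (- (Si *m dS *m Si)) *m P + Si *m dP
     - (Si *m C *m S - Si *m dS) *m (Si *m P) + (Si *m P) *m A
     = Si *m (dP - C *m P + P *m A).
  rewrite ?mulmxDl ?mulmxDr ?mulNmx ?mulmxN ?mulmxA ?canc ?mulmxDl ?mulNmx ?mulmxN ?mulmxA ?canc.
  by rewrite zmod_id3.
by rewrite -scalemxAr !mulmxA canc.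
Qed.

Unset Implicit Arguments.
Theorem theorem4 (R : realType) (U : set 'rV[R]_4) (g : 'rV[R]_4 -> 'M[R]_4)
  (K C A : 'I_4 -> 'rV[R]_4 -> 'M[R[i]]_2) (Psi : 'rV[R]_4 -> 'M[R[i]]_2) :
  open U ->
  (* (M,g): smooth Lorentzian metric *)
  smooth_rmx U g ->
  (forall x, U x -> lorentzian (g x)) ->
  (* K^mu: smooth Herm(2)-valued vector field *)
  (forall m, smooth_cmx U (K m)) ->
  (forall m x, U x -> Herm2 (K m x)) ->
  (forall m n x, U x ->
     K m x *m tildeM (K n x) + K n x *m tildeM (K m x) = ((2 * ginv g x m n)%:C)%:M) ->
  (forall x, U x -> divM g (fun m y => pi_plus (K m y)) x = 0) ->
  (* C_mu: smooth su(2)-valued covector field; A_mu: smooth u(2)-valued *)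
  (forall m, smooth_cmx U (C m)) ->
  (forall m x, U x -> su2 (C m x)) ->
  (forall m, smooth_cmx U (A m)) ->
  (forall m x, U x -> u2 (A m x)) ->
  (* Psi: smooth Mat(2,C)-valued function *)
  smooth_cmx U Psi ->
  (* (I) *)
  (forall V : 'rV[R]_4 -> 'M[R[i]]_2,
     smooth_cmx U V -> (forall x, U x -> U2 (V x)) ->
     eqn_star U Psi K C A ->
     eqn_star U (fun x => Psi x *m V x) K C
       (fun m x => invmx (V x) *m A m x *m V x - invmx (V x) *m pdM m V x))
  /\
  (* (II) *)
  (forall S : 'rV[R]_4 -> 'M[R[i]]_2,
     smooth_cmx U S -> (forall x, U x -> SU2 (S x)) ->
     eqn_star U Psi K C A ->
     eqn_star U (fun x => invmx (S x) *m Psi x *m S x)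
       (fun m x => invmx (S x) *m K m x *m S x)
       (fun m x => invmx (S x) *m C m x *m S x - invmx (S x) *m pdM m S x)
       (fun m x => invmx (S x) *m A m x *m S x - invmx (S x) *m pdM m S x))
  /\
  (* (III) *)
  (forall S : 'rV[R]_4 -> 'M[R[i]]_2,
     smooth_cmx U S -> (forall x, U x -> SU2 (S x)) ->
     eqn_star U Psi K C A ->
     eqn_star U (fun x => invmx (S x) *m Psi x)
       (fun m x => invmx (S x) *m K m x *m S x)
       (fun m x => invmx (S x) *m C m x *m S x - invmx (S x) *m pdM m S x)
       A).

Proof.
move=> oU sg lg sK hK cK dK sC hC sA hA sPsi.
have canc : forall (V Z : 'M[R[i]]_2), V *m adjM V = 1%:M -> Z *m V *m adjM V = Z.
  by move=> V Z h; rewrite -mulmxA h mulmx1.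
split; [|split].
- move=> V sV uV eq x Ux.
  have invV := inv_adj (uV x Ux).
  apply: (@eq_trans _ _ ((\sum_(m < 4) ('i *: (K m x *m (pdM m Psi x - C m x *m Psi x + Psi x *m A m x)))) *m V x)); last by rewrite (eq x Ux) mul0mx.
  rewrite mulmx_suml; apply: eq_bigr => m _.
  rewrite (hasD_pdM (hasD_mul (smooth_hasD m sPsi Ux) (smooth_hasD m sV Ux))).
  rewrite invV.
  have -> : pdM m Psi x *m V x + Psi x *m pdM m V x - C m x *m (Psi x *m V x) +
    Psi x *m V x *m (adjM (V x) *m A m x *m V x - adjM (V x) *m pdM m V x) =
    (pdM m Psi x - C m x *m Psi x + Psi x *m A m x) *m V x.
    rewrite !mulmxBr !mulmxDl !mulmxA !(canc _ _ (uV x Ux)) mulNmx.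
    by rewrite zmod_id1.
  by rewrite mulmxA scalemxAl.
- move=> S sS uS eq x Ux.
  have SU : forall y, U y -> S y *m adjM (S y) = 1%:M by move=> y Uy; case: (uS y Uy).
  have invE : forall y, U y -> invmx (S y) = adjM (S y) by move=> y Uy; exact: inv_adj (SU y Uy).
  have nU := open_near oU Ux.
  have dadj : forall m, adjM (pdM m S x) = - (adjM (S x) *m pdM m S x *m adjM (S x)).
    move=> m.
    have h1 := hasD_mul (smooth_hasD m sS Ux) (hasD_adj (smooth_hasD m sS Ux)).
    have h2 : hasD x m (fun y => S y *m adjM (S y)) 0.
      apply: hasD_near (hasD_cst x m 1%:M).
      by apply: filterS nU => y Uy; rewrite SU.
    have E := hasD_pdM h1; rewrite (hasD_pdM h2) in E.
    have E2 : S x *m adjM (pdM m S x) = - (pdM m S x *m adjM (S x)).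
      by apply/eqP; rewrite -addr_eq0 addrC E.
    transitivity (adjM (S x) *m (S x *m adjM (pdM m S x))).
      by rewrite mulmxA (mulmx1C (SU x Ux)) mul1mx.
    by rewrite E2 mulmxN mulmxA.
  apply: (@eq_trans _ _ (adjM (S x) *m (\sum_(m < 4) ('i *: (K m x *m (pdM m Psi x - C m x *m Psi x + Psi x *m A m x)))) *m S x)); last by rewrite (eq x Ux) mulmx0 mul0mx.
  rewrite mulmx_sumr mulmx_suml; apply: eq_bigr => m _.
  have hP : hasD x m (fun y => invmx (S y) *m Psi y *m S y)
     ((adjM (pdM m S x) *m Psi x + adjM (S x) *m pdM m Psi x) *m S x + adjM (S x) *m Psi x *m pdM m S x).
    apply: hasD_near (hasD_mul (hasD_mul (hasD_adj (smooth_hasD m sS Ux)) (smooth_hasD m sPsi Ux)) (smooth_hasD m sS Ux)).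
    by apply: filterS nU => y Uy; rewrite invE.
  rewrite (hasD_pdM hP) (invE x Ux) dadj.
  exact: algII (SU x Ux).
- move=> S sS uS eq x Ux.
  have SU : forall y, U y -> S y *m adjM (S y) = 1%:M by move=> y Uy; case: (uS y Uy).
  have invE : forall y, U y -> invmx (S y) = adjM (S y) by move=> y Uy; exact: inv_adj (SU y Uy).
  have nU := open_near oU Ux.
  have dadj : forall m, adjM (pdM m S x) = - (adjM (S x) *m pdM m S x *m adjM (S x)).
    move=> m.
    have h1 := hasD_mul (smooth_hasD m sS Ux) (hasD_adj (smooth_hasD m sS Ux)).
    have h2 : hasD x m (fun y => S y *m adjM (S y)) 0.
      apply: hasD_near (hasD_cst x m 1%:M).
      by apply: filterS nU => y Uy; rewrite SU.
    have E := hasD_pdM h1; rewrite (hasD_pdM h2) in E.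
    have E2 : S x *m adjM (pdM m S x) = - (pdM m S x *m adjM (S x)).
      by apply/eqP; rewrite -addr_eq0 addrC E.
    transitivity (adjM (S x) *m (S x *m adjM (pdM m S x))).
      by rewrite mulmxA (mulmx1C (SU x Ux)) mul1mx.
    by rewrite E2 mulmxN mulmxA.
  apply: (@eq_trans _ _ (adjM (S x) *m (\sum_(m < 4) ('i *: (K m x *m (pdM m Psi x - C m x *m Psi x + Psi x *m A m x)))))); last by rewrite (eq x Ux) mulmx0.
  rewrite mulmx_sumr; apply: eq_bigr => m _.
  have hP : hasD x m (fun y => invmx (S y) *m Psi y)
     (adjM (pdM m S x) *m Psi x + adjM (S x) *m pdM m Psi x).
    apply: hasD_near (hasD_mul (hasD_adj (smooth_hasD m sS Ux)) (smooth_hasD m sPsi Ux)).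
    by apply: filterS nU => y Uy; rewrite invE.
  rewrite (hasD_pdM hP) (invE x Ux) dadj.
  exact: algIII (SU x Ux).
Qed.
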